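(* Let $a, b, n$ be positive integers with $b>1$, $n>1$ and $\gcd(r_b(n),a)=1$. Then the Frobenius number of $S_a(b,n)$ is \[\operatorname{F}(S_a(b,n)) = \begin{cases} (n-1)\,(b^n - 1 - a) + a\, r_b(n) & \text{if } a < b^n - 1,\\ b^n - 1 - a + a\, r_b(n) & \text{if } a > b^n - 1.\end{cases}\]
   Context: For $\ell \ge 1$, $r_b(\ell) = \sum_{j=0}^{\ell-1} b^j$, and $r_b(0)=0$. For $i \ge 1$, $a_i := r_b(n) + a\, r_b(i-1)$; $S_a(b,n)$ is the numerical semigroup generated by $\{a_i : i\ge 1\}$. The Frobenius number $\operatorname{F}(S)$ of a numerical semigroup $S$ is the largest integer not in $S$. *)

(* Defs.v *)
From mathcomp Require Import all_boot.
Set Implicit Arguments. Unset Strict Implicit. Unset Printing Implicit Defensive.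

Definition rb (b l : nat) : nat := \sum_(j < l) b ^ j.

Definition agen (a b n i : nat) : nat := rb b n + a * rb b i.-1.

Inductive in_semigroup (G : nat -> Prop) : nat -> Prop :=
| sg_zero : in_semigroup G 0
| sg_add : forall x g, in_semigroup G x -> G g -> in_semigroup G (x + g).

Definition Sab (a b n : nat) : nat -> Prop :=
  in_semigroup (fun g => exists2 i, 0 < i & g = agen a b n i).

Definition is_frobenius (S : nat -> Prop) (F : nat) : Prop :=
  ~ S F /\ forall m, F < m -> S m.

(* Main.v *)
Require Import Defs.
From mathcomp Require Import all_boot zify.

Lemma rb0 b : rb b 0 = 0.
Proof. by rewrite /rb big_ord0. Qed.

Lemma rbSr b e : rb b e.+1 = rb b e + b ^ e.
Proof. by rewrite /rb big_ord_recr. Qed.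

Lemma rbSl b e : rb b e.+1 = 1 + b * rb b e.
Proof.
rewrite /rb big_ord_recl expn0 big_distrr /=; congr (_ + _).
by apply: eq_bigr => i _; rewrite expnS.
Qed.

Lemma rb_pow b e : 0 < b -> (b - 1) * rb b e + 1 = b ^ e.
Proof.
move=> b0; elim: e => [|e IH]; first by rewrite rb0 muln0.
rewrite rbSr expnS -IH; nia.
Qed.

Lemma rb_ge b e : 0 < b -> e <= rb b e.
Proof.
move=> b0; elim: e => [|e IH]; first by [].
rewrite rbSr; have := expn_gt0 b e; rewrite b0 /=; lia.
Qed.

Lemma sum_nseq (f : nat -> nat) k x : \sum_(e <- nseq k x) f e = k * f x.
Proof. elim: k => [|k IH]; first by rewrite big_nil. by rewrite /= big_cons IH mulSn. Qed.

Lemma sum_const_seq (es : seq nat) c : \sum_(e <- es) c = size es * c.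
Proof. elim: es => [|e es IH]; first by rewrite big_nil. by rewrite big_cons IH /= mulSn. Qed.

Lemma sum_pow b es : 0 < b ->
  \sum_(e <- es) b ^ e = (b - 1) * \sum_(e <- es) rb b e + size es.
Proof.
move=> b0; elim: es => [|e es IH]; first by rewrite !big_nil muln0.
rewrite !big_cons IH /= -(@rb_pow b e b0) mulnDr; lia.
Qed.

Lemma mem_Sab a b n es : Sab a b n (size es * rb b n + a * \sum_(e <- es) rb b e).
Proof.
elim: es => [|e es IH]; first by rewrite /= big_nil muln0; constructor.
rewrite big_cons /=.
have -> : (size es).+1 * rb b n + a * (rb b e + \sum_(e0 <- es) rb b e0) =
   (size es * rb b n + a * \sum_(e <- es) rb b e) + agen a b n e.+1.
  rewrite /agen /= mulSn mulnDr; lia.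
by apply: sg_add => //; exists e.+1.
Qed.

Lemma Sab_inv a b n m : Sab a b n m ->
  exists es, m = size es * rb b n + a * \sum_(e <- es) rb b e.
Proof.
rewrite /Sab; elim => [|x g _ [es ->] [i i0 ->]].
  by exists [::]; rewrite big_nil muln0.
exists (i.-1 :: es); rewrite big_cons /agen /= mulSn mulnDr; lia.
Qed.

Lemma pow_fold b n x : 0 < b -> b ^ (x %% n) = b ^ x %[mod b ^ n - 1].
Proof.
move=> b0; rewrite {2}(divn_eq x n) expnD (mulnC (x %/ n) n) expnM.
have h1 : b ^ n %% (b ^ n - 1) = 1 %% (b ^ n - 1).
  have hp := expn_gt0 b n; rewrite b0 /= in hp.
  by rewrite -{1}(subnK hp) addnC modnDr.
have h2 : (b ^ n) ^ (x %/ n) %% (b ^ n - 1) = 1 %% (b ^ n - 1).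
  by rewrite -modnXm h1 modnXm exp1n.
by rewrite -modnMml h2 modnMml mul1n.
Qed.

Lemma rot_sum b n e : \sum_(s < n) b ^ ((e + s) %% n) = rb b n.
Proof.
elim: e => [|e IH].
  by rewrite /rb; apply: eq_bigr => s _; rewrite add0n modn_small.
rewrite -IH; case: n IH => [|n] IH; first by rewrite !big_ord0.
set f := fun s => b ^ ((e + s) %% n.+1).
have E1 := big_ord_recl n.+1 (fun s : 'I_n.+2 => f s).
have E2 := big_ord_recr n.+1 (fun s : 'I_n.+2 => f s).
rewrite /= in E1 E2.
have Hf : f n.+1 = f 0 by rewrite /f addn0 modnDr.
have L : \sum_(i < n.+1) b ^ ((e.+1 + i) %% n.+1) = \sum_(i < n.+1) f (bump 0 i).
  by apply: eq_bigr => i _; rewrite /f /bump /= add1n addSnnS.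
have R : \sum_(i < n.+1) b ^ ((e + i) %% n.+1) = \sum_(i < n.+1) f i by [].
have e1 : \sum_(i < n.+2) f i = f 0 + \sum_(i < n.+1) f (bump 0 i) := E1 0 addn.
have e2 : \sum_(i < n.+2) f i = \sum_(i < n.+1) f i + f n.+1 := E2 0 addn.
rewrite L R; lia.
Qed.

Lemma key b n es : 0 < n -> 1 < b -> 0 < size es ->
  (b ^ n - 1) %| \sum_(e <- es) b ^ e -> n * (b - 1) <= size es.
Proof.
move=> n0 b1 s0 Hd.
have b0 : 0 < b by lia.
have Hr : b ^ n - 1 = (b - 1) * rb b n by have := @rb_pow b n b0; lia.
have Hs : forall s, b ^ n - 1 <= \sum_(e <- es) b ^ ((e + s) %% n).
  move=> s; apply: dvdn_leq.
    case: es s0 {Hd} => // e es' _; rewrite big_cons.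
    have := expn_gt0 b ((e + s) %% n); rewrite b0 /=; lia.
  rewrite /dvdn -modn_summ.
  rewrite (eq_bigr (fun e => b ^ (e + s) %% (b ^ n - 1))); last first.
    by move=> e _; apply: pow_fold.
  rewrite modn_summ.
  have -> : \sum_(e <- es) b ^ (e + s) = b ^ s * \sum_(e <- es) b ^ e.
    by rewrite big_distrr /=; apply: eq_bigr => e _; rewrite expnD mulnC.
  by rewrite -/(dvdn _ _) dvdn_mull.
have Hsum : \sum_(s < n) \sum_(e <- es) b ^ ((e + s) %% n) = size es * rb b n.
  rewrite exchange_big /=.
  rewrite (eq_bigr (fun e => rb b n)); last by move=> e _; apply: rot_sum.
  by rewrite sum_const_seq.
have : n * (b ^ n - 1) <= size es * rb b n.
  rewrite -Hsum.
  have -> : n * (b ^ n - 1) = \sum_(s < n) (b ^ n - 1) by rewrite sum_nat_const card_ord.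
  by apply: leq_sum => s _; apply: Hs.
have rpos : 0 < rb b n by have := @rb_ge b n b0; lia.
by rewrite Hr mulnA (leq_pmul2r rpos).
Qed.

Lemma repG b m t : 0 < b -> 0 < m -> t < rb b m ->
  exists es, \sum_(e <- es) rb b e = t /\ size es <= 1 + (m - 1) * (b - 1).
Proof.
move=> b0; elim: m t => [//|m IH] t _ ht.
case: m IH ht => [|m] IH ht.
  rewrite rbSl rb0 muln0 in ht; exists [::]; rewrite big_nil /=; lia.
rewrite rbSl in ht.
set R := rb b m.+1 in ht IH *.
have Rpos : 0 < R by have := @rb_ge b m.+1 b0; rewrite /R; lia.
have hd := divn_eq t R.
have hm := ltn_pmod t Rpos.
case: (leqP b (t %/ R)) => hq.
  exists (nseq b m.+1); rewrite sum_nseq size_nseq -/R.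
  split; last by nia.
  have : b * R <= t %/ R * R by rewrite leq_mul2r hq orbT.
  nia.
have [es1 [h1 h2]] := IH (t %% R) isT hm.
exists (nseq (t %/ R) m.+1 ++ es1); rewrite big_cat /= sum_nseq h1 size_cat size_nseq -/R.
split; first by lia.
nia.
Qed.

Lemma repH b m j : 0 < b -> 1 <= j <= m ->
  exists es, \sum_(e <- es) rb b e = rb b m - j /\ size es <= 1 + j * (b - 1).
Proof.
move=> b0; elim: m j => [|m IH] j hj; first by lia.
have Rg := @rb_ge b m b0.
case: (ltnP 1 j) => hj1.
  have [es1 [h1 h2]] := IH j.-1 ltac:(lia).
  exists (nseq (b - 1) m ++ es1); rewrite big_cat /= sum_nseq h1 size_cat size_nseq rbSl.
  split; nia.
exists (nseq b m); rewrite sum_nseq size_nseq rbSl; split; nia.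
Qed.

Lemma rep b n t : 0 < b -> 0 < n -> t < rb b n ->
  exists es, \sum_(e <- es) rb b e = t /\ size es <= 1 + (n - 1) * (b - 1) /\
    (rb b n - t <= n - 1 -> size es <= 1 + (rb b n - t) * (b - 1)).
Proof.
move=> b0 n0 ht.
case: (leqP (rb b n - t) (n - 1)) => hj.
  have [es [h1 h2]] := @repH b n (rb b n - t) b0 ltac:(lia).
  exists es; split; first by lia.
  split => // ; nia.
have [es [h1 h2]] := @repG b n t b0 n0 ht.
exists es; split => //; split => //; lia.
Qed.

Lemma contra b n es c : 1 < b -> 0 < c < n -> size es <= c * (b - 1) ->
  rb b n %| \sum_(e <- es) rb b e + c -> False.
Proof.
move=> b1 hc hs hd.
have b0 : 0 < b by lia.
set es' := es ++ nseq (c * (b - 1) - size es) 0.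
have hsz : size es' = c * (b - 1) by rewrite /es' size_cat size_nseq; lia.
have E : \sum_(e <- es') b ^ e = (b - 1) * (\sum_(e <- es) rb b e + c).
  rewrite /es' big_cat /= sum_nseq expn0 muln1 sum_pow //; lia.
have Hr : b ^ n - 1 = (b - 1) * rb b n by have := @rb_pow b n b0; lia.
have hpos : 0 < size es' by rewrite hsz; nia.
have hdv : b ^ n - 1 %| \sum_(e <- es') b ^ e.
  by rewrite E Hr dvdn_pmul2l //; lia.
have := @key b n es' ltac:(lia) b1 hpos hdv.
rewrite hsz; nia.
Qed.

Lemma mem2 a b n m t es : 0 < rb b n -> \sum_(e <- es) rb b e = t -> a * t <= m ->
  rb b n %| m - a * t -> (size es).-1 * rb b n < m - a * t -> Sab a b n m.
Proof.
move=> rpos ht hle hd hlt.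
set k := (m - a * t) %/ rb b n.
have hk : m - a * t = k * rb b n by rewrite /k divnK.
rewrite hk ltn_pmul2r // in hlt.
have := mem_Sab a b n (es ++ nseq (k - size es) 0).
rewrite size_cat size_nseq big_cat /= sum_nseq rb0 muln0 addn0 ht.
have -> : size es + (k - size es) = k by lia.
by rewrite -hk subnK.
Qed.

Lemma exists_t a r m : 0 < a -> 0 < r -> coprime r a ->
  exists t, t < r /\ a * t = m %[mod r].
Proof.
move=> a0 r0 hc.
rewrite coprime_sym in hc.
have [[u1 u2] /= hu] := coprimeP _ a0 hc.
exists ((m * u1) %% r); split; first by rewrite ltn_mod.
rewrite modnMmr.
have -> : a * (m * u1) = m + (m * u2) * r by nia.
by rewrite addnC modnMDl.
Qed.

Theorem theorem22 (a b n : nat) :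
  0 < a -> 1 < b -> 1 < n -> coprime (rb b n) a ->
  (a < b ^ n - 1 ->
     is_frobenius (Sab a b n) ((n - 1) * (b ^ n - 1 - a) + a * rb b n)) /\
  (b ^ n - 1 < a ->
     is_frobenius (Sab a b n) (a * rb b n + b ^ n - 1 - a)).
Proof.
move=> a0 b1 n1 hc.
have b0 : 0 < b by lia.
have Hr : b ^ n - 1 = (b - 1) * rb b n by have := @rb_pow b n b0; lia.
have rge := @rb_ge b n b0.
rewrite Hr.
set r := rb b n in hc Hr rge *.
have er : rb b n = r by [].
clearbody r.
have rpos : 0 < r by lia.
split => ha; split.
- move=> /Sab_inv [es hF]; rewrite er in hF.
  set k := size es in hF; set t := \sum_(e <- es) rb b e in hF.
  have E : k * r + a * (t + (n - 1)) = ((n - 1) * (b - 1) + a) * r.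
    have h1 : (n - 1) * ((b - 1) * r - a) + (n - 1) * a = (n - 1) * (b - 1) * r.
      by rewrite -mulnDr subnK ?mulnA //; lia.
    rewrite mulnDr mulnDl (mulnC a (n - 1)); lia.
  have hd : r %| t + (n - 1).
    rewrite -(Gauss_dvdr _ hc) -(dvdn_addr _ (dvdn_mull k (dvdnn r))) E.
    exact: dvdn_mull.
  have hle : r <= t + (n - 1) by apply: dvdn_leq => //; lia.
  have h1 : a * r <= a * (t + (n - 1)) by rewrite leq_mul2l hle orbT.
  have h2 : k * r <= (n - 1) * (b - 1) * r by rewrite mulnDl in E; lia.
  rewrite leq_pmul2r // in h2.
  have hd' : rb b n %| \sum_(e <- es) rb b e + (n - 1) by rewrite er; exact: hd.
  exact: (@contra b n es (n - 1) b1 ltac:(lia) h2 hd').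
- move=> m hm.
  have [t [ht htm]] := @exists_t a r m a0 rpos hc.
  have [es [h1 [h2 h3]]] := @rep b n t b0 ltac:(lia) (ltac:(by rewrite er) : t < rb b n).
  rewrite er in h3.
  have hat : a * t <= m.
    have : a * t <= a * r by rewrite leq_mul2l (ltnW ht) orbT.
    nia.
  apply: (@mem2 a b n m t es (ltac:(by rewrite er) : 0 < rb b n) h1 hat); rewrite er.
    by rewrite -eqn_mod_dvd // htm.
  set j := r - t in h3.
  have hB : a * r = a * t + a * j by rewrite /j -mulnDr subnKC // ltnW.
  have hC : j * ((b - 1) * r - a) + a * j = j * (b - 1) * r.
    by rewrite mulnC -mulnDl subnK ?mulnA ?(mulnC _ j) //; lia.
  case: (leqP j (n - 1)) => hj.
    have hs := h3 hj.
    have h4 : (size es).-1 * r <= j * (b - 1) * r by rewrite leq_mul2r; apply/orP; right; nia.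
    have hA : j * ((b - 1) * r - a) <= (n - 1) * ((b - 1) * r - a) by rewrite leq_mul2r hj orbT.
    lia.
  have h4 : (size es).-1 * r <= (n - 1) * (b - 1) * r by rewrite leq_mul2r; apply/orP; right; nia.
  have h5 : (n - 1) * ((b - 1) * r - a) + (n - 1) * a = (n - 1) * (b - 1) * r.
    by rewrite -mulnDr subnK ?mulnA //; lia.
  have h6 : (n - 1) * a <= a * j by rewrite mulnC leq_mul2l ltnW ?orbT.
  lia.
- move=> /Sab_inv [es hF]; rewrite er in hF.
  set k := size es in hF; set t := \sum_(e <- es) rb b e in hF.
  have E : k * r + a * (t + 1) = (1 * (b - 1) + a) * r.
    have := expn_gt0 b n; rewrite b0 /= => hbn.
    have : a * 1 <= a * r by rewrite leq_mul2l rpos orbT.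
    rewrite mulnDr mulnDl mul1n muln1; lia.
  have hd : r %| t + 1.
    rewrite -(Gauss_dvdr _ hc) -(dvdn_addr _ (dvdn_mull k (dvdnn r))) E.
    exact: dvdn_mull.
  have hle : r <= t + 1 by apply: dvdn_leq => //; lia.
  have h1 : a * r <= a * (t + 1) by rewrite leq_mul2l hle orbT.
  have h2 : k * r <= 1 * (b - 1) * r by rewrite mulnDl in E; lia.
  rewrite leq_pmul2r // in h2.
  have hd' : rb b n %| \sum_(e <- es) rb b e + 1 by rewrite er; exact: hd.
  exact: (@contra b n es 1 b1 ltac:(lia) h2 hd').
- move=> m hm.
  have [t [ht htm]] := @exists_t a r m a0 rpos hc.
  have [es [h1 [h2 h3]]] := @rep b n t b0 ltac:(lia) (ltac:(by rewrite er) : t < rb b n).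
  rewrite er in h3.
  have [j hjd] : exists j, j = r - t by eexists.
  rewrite -hjd in h3.
  have hB : a * r = a * t + a * j by rewrite hjd -mulnDr subnKC // ltnW.
  have hj1 : 1 <= j by rewrite hjd; lia.
  have hat : a * t <= m.
    have : a * 1 <= a * j by rewrite leq_mul2l hj1 orbT.
    lia.
  apply: (@mem2 a b n m t es (ltac:(by rewrite er) : 0 < rb b n) h1 hat); rewrite er.
    by rewrite -eqn_mod_dvd // htm.
  have hs : (size es).-1 <= (j - 1) * (b - 1) + (b - 1).
    have hJ : j * (b - 1) = (j - 1) * (b - 1) + (b - 1).
      by rewrite mulnBl mul1n subnK // leq_pmull.
    case: (leqP j (n - 1)) => hj.
      have := h3 hj; move: hJ; generalize ((j - 1) * (b - 1)) (j * (b - 1)) => P Q; lia.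
    have : (n - 1) * (b - 1) <= j * (b - 1) by rewrite leq_mul2r ltnW ?orbT.
    move: hJ h2; generalize ((j - 1) * (b - 1)) (j * (b - 1)) ((n - 1) * (b - 1)) => P Q T; lia.
  have h4 : (size es).-1 * r <= ((j - 1) * (b - 1) + (b - 1)) * r by rewrite leq_mul2r hs orbT.
  have hD : (j - 1) * ((b - 1) * r) <= (j - 1) * a by rewrite leq_mul2l ltnW ?orbT.
  have hE : a * j = (j - 1) * a + a by rewrite mulnBl mul1n mulnC subnK // leq_pmull.
  rewrite mulnDl -mulnA in h4.
  lia.
Qed.
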